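(* Let $A=k_{p_{ij}}[x_1,\dots,x_n]$ and let $\theta$ be a reflection of $A$. Then there exist an elementary transformation $g$ of $A$, an index $i\in[n]$ and a scalar $\lambda\in k^\times$, $\lambda\ne1$, such that $g^{-1}\theta g=\theta_{i,\lambda}$.
   Context: $k$ is an algebraically closed field of characteristic zero, $n\ge2$, $[n]=\{1,\dots,n\}$. $A=k_{p_{ij}}[x_1,\dots,x_n]$ is the $k$-algebra generated by $x_1,\dots,x_n$ with relations $x_jx_i=p_{ij}x_ix_j$ ($i<j$), nonzero $p_{ij}\in k$, $\deg x_i=1$; set $p_{ii}=1$, $p_{ij}=p_{ji}^{-1}$ for $i>j$. $\mathrm{Aut}(A)$ is the group of graded algebra automorphisms. For $g\in\mathrm{Aut}(A)$, $Tr_A(g,t)=\sum_i\mathrm{tr}(g|_{A_i})t^i$; $g$ is a quasi-reflection if $Tr_A(g,t)=\frac{1}{(1-t)^{n-1}(1-\lambda t)}$ for some $\lambda\ne1$. A reflection of $A$ is a quasi-reflection $g$ of finite order for which there is a basis $y_1,\dots,y_n$ of $A_1$ with $g(y_j)=y_j$ for $j\le n-1$ and $g(y_n)=\lambda y_n$. The block of $i$ is $B(i)=\{i': p_{ij}=p_{i'j}\ \forall j\}$. An elementary transformation is a graded automorphism $\theta$ of $A$ with $\theta(x_i)=x'_i$ ($i\in[n]$) where, for each block $B_w$, $\{x'_i: i\in B_w\}$ is any basis of $\bigoplus_{i\in B_w}kx_i$ (every such choice defines an automorphism). For $s\in[n]$ and $\lambda\ne 0,1$, the standard reflection $\theta_{s,\lambda}$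 is the automorphism with $\theta_{s,\lambda}(x_s)=\lambda x_s$ and $\theta_{s,\lambda}(x_i)=x_i$ for $i\ne s$. *)

(* Defs.v *)
From HB Require Import structures.
From mathcomp Require Import all_boot all_order all_algebra.
Set Implicit Arguments. Unset Strict Implicit. Unset Printing Implicit Defensive.
Import Order.TTheory GRing.Theory Num.Theory.
Local Open Scope ring_scope.

(* ------------------------------------------------------------------------
   The skew polynomial ring A = k_{p_ij}[x_1,...,x_n] (indices 0..n-1 here).
   The parameters are stored in a matrix p : 'M[k]_n with p i j = p_ij,
   p_ii = 1, p_ij = p_ji^{-1}, all nonzero; relations x_j x_i = p_ij x_i x_j.

   A_d has the PBW basis of ordered monomials x^w = x_{w 0} ... x_{w (d-1)}
   with w a nondecreasing word of length d.  A word u of length d gives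
   x_{u 0}...x_{u (d-1)} = skew_coef p u * x^{sort u}, where skew_coef is the
   product of p_{u b, u a} over inversions a < b, u a > u b
   (since x_i x_j = p_{ji} x_j x_i).

   A graded automorphism g is recorded by its degree-one matrix M:
   g(x_j) = \sum_i M i j x_i  (column j = image of x_j); composition of
   automorphisms is matrix product.
   ------------------------------------------------------------------------ *)

Definition skew_params (k : fieldType) (n : nat) (p : 'M[k]_n) : Prop :=
  (forall i j, p i j != 0) /\ (forall i, p i i = 1) /\
  (forall i j, p i j * p j i = 1).

Definition word (n d : nat) := {ffun 'I_d -> 'I_n}.

Definition sorted_word (n d : nat) (w : word n d) : bool :=
  [forall a : 'I_d, forall b : 'I_d, (a <= b)%N ==> (w a <= w b)%N].

Definition same_content (n d : nat) (u w : word n d) : bool :=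
  [forall i : 'I_n, #|[set a | u a == i]| == #|[set a | w a == i]|].

Definition skew_coef (k : fieldType) (n d : nat) (p : 'M[k]_n) (u : word n d) : k :=
  \prod_(a < d) \prod_(b < d | (a < b)%N && (u b < u a)%N) p (u b) (u a).

(* coefficient of the ordered monomial x^w (w sorted) in g(x_{v 0} ... x_{v (d-1)}),
   where g has degree-one matrix M *)
Definition act_coef (k : fieldType) (n d : nat) (p : 'M[k]_n) (M : 'M[k]_n)
  (v w : word n d) : k :=
  \sum_(u : word n d | same_content u w) skew_coef p u * \prod_(a < d) M (u a) (v a).

Definition trace_deg (k : fieldType) (n : nat) (p : 'M[k]_n) (M : 'M[k]_n) (d : nat) : k :=
  \sum_(w : word n d | sorted_word w) act_coef p M w w.

Definition pairw (n : nat) (i j : 'I_n) : word n 2 :=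
  [ffun a : 'I_2 => if val a == 0%N then i else j].

(* M is the degree-one part of a graded algebra automorphism of A:
   M invertible and g(x_j) g(x_i) = p_ij g(x_i) g(x_j) in A_2 for all i, j *)
Definition is_aut (k : fieldType) (n : nat) (p : 'M[k]_n) (M : 'M[k]_n) : Prop :=
  M \in unitmx /\
  forall (i j : 'I_n) (w : word n 2), sorted_word w ->
    act_coef p M (pairw j i) w = p i j * act_coef p M (pairw i j) w.

(* coefficient of t^d in 1 / ((1-t)^(n-1) (1 - lam t)) *)
Definition qr_series_coef (k : fieldType) (n : nat) (lam : k) (d : nat) : k :=
  \sum_(j < d.+1) lam ^+ j * ('C(d - j + (n - 2), n - 2))%:R.

Definition quasi_reflection_with (k : fieldType) (n : nat) (p : 'M[k]_n)
  (M : 'M[k]_n) (lam : k) : Prop :=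
  is_aut p M /\ lam != 1 /\ forall d : nat, trace_deg p M d = qr_series_coef n lam d.

Definition is_reflection (k : fieldType) (n : nat) (p : 'M[k]_n) (M : 'M[k]_n) : Prop :=
  exists lam : k,
    quasi_reflection_with p M lam /\
    (exists m : nat, (0 < m)%N /\ M ^+ m = 1%:M) /\
    (exists P : 'M[k]_n, P \in unitmx /\
       M *m P = P *m diag_mx (\row_(j < n) if (val j == n.-1)%N then lam else 1)).

(* elementary transformation: a graded automorphism mapping each
   span{x_i : i in B_w} to itself, i.e. M i j != 0 only if i is in the block of j *)
Definition in_block (k : fieldType) (n : nat) (p : 'M[k]_n) (i j : 'I_n) : Prop :=
  forall l : 'I_n, p i l = p j l.

Definition elementary (k : fieldType) (n : nat) (p : 'M[k]_n) (M : 'M[k]_n) : Prop :=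
  is_aut p M /\ forall i j : 'I_n, M i j != 0 -> in_block p i j.

Definition std_refl (k : fieldType) (n : nat) (s : 'I_n) (lam : k) : 'M[k]_n :=
  diag_mx (\row_(j < n) if j == s then lam else 1).

(* Main.v *)
Require Import Defs.
From HB Require Import structures.
From mathcomp Require Import all_boot all_order all_algebra.
From mathcomp Require Import ring.
Import GRing.Theory.
Set Implicit Arguments. Unset Strict Implicit. Unset Printing Implicit Defensive.
Local Open Scope ring_scope.

Definition o0 : 'I_2 := ord0.
Definition o1 : 'I_2 := ord_max.

Lemma pairw0 n (a b : 'I_n) : pairw a b o0 = a.
Proof. by rewrite /pairw ffunE. Qed.
Lemma pairw1 n (a b : 'I_n) : pairw a b o1 = b.
Proof. by rewrite /pairw ffunE. Qed.

Lemma word2_eta n (w : word n 2) : w = pairw (w o0) (w o1).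
Proof.
apply/ffunP => x; rewrite /pairw ffunE.
case: x => [[|[|//]] Hx] /=.
  by congr (w _); apply: val_inj.
by congr (w _); apply: val_inj.
Qed.

Lemma pairw_inj n (a b c d : 'I_n) : (pairw a b == pairw c d) = (a == c) && (b == d).
Proof.
apply/eqP/andP => [E|[/eqP -> /eqP ->]//].
have := congr1 (fun w : word n 2 => w o0) E; have := congr1 (fun w : word n 2 => w o1) E.
by rewrite /= !pairw0 !pairw1 => -> ->; rewrite !eqxx.
Qed.

Lemma card2 (P : pred 'I_2) : #|[set x | P x]| = (P o0 + P o1)%N.
Proof.
rewrite -sum1_card big_mkcond /= big_ord_recl big_ord_recl big_ord0 /=.
rewrite !inE addn0.
have -> : (lift ord0 ord0 : 'I_2) = o1 by apply: val_inj.
by case: (P o0); case: (P o1).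
Qed.

Lemma same_content_pair n (u : word n 2) (a b : 'I_n) :
  same_content u (pairw a b) = (u == pairw a b) || (u == pairw b a).
Proof.
rewrite [u]word2_eta !pairw_inj /same_content.
move: (u o0) (u o1) => x y.
apply/forallP/idP => [H|].
  have Hx := H x; have Hy := H y.
  move: Hx Hy; rewrite !card2 !pairw0 !pairw1 !eqxx.
  case: (a =P x) => [<-|nax]; case: (b =P x) => [ebx|nbx] //=.
  - rewrite eqxx /= => _; case: (a =P y) => [->|nay]; case: (b =P y) => [->|nby] //=; by rewrite ?eqxx.
  - move=> _; case: (a =P y) => [->|nay]; case: (b =P y) => [->|nby] //=; by rewrite ?eqxx ?andbT.
  - subst x => _; case: (a =P y) => [->|nay]; case: (b =P y) => [->|nby] //=; by rewrite ?eqxx ?orbT.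
move=> H i; rewrite !card2 !pairw0 !pairw1.
by case/orP: H => /andP[/eqP -> /eqP ->] //; rewrite addnC.
Qed.

Lemma prod2 (k : fieldType) (F : 'I_2 -> k) : \prod_(x < 2) F x = F o0 * F o1.
Proof.
rewrite big_ord_recl big_ord_recl big_ord0 mulr1.
by congr (_ * F _); apply: val_inj.
Qed.

Lemma skew_pw (k : fieldType) n (p : 'M[k]_n) (a b : 'I_n) :
  skew_coef p (pairw a b) = if (b < a)%N then p b a else 1.
Proof.
rewrite /skew_coef prod2.
rewrite (eq_bigl (fun y : 'I_2 => (y == o1) && (b < a)%N)); last first.
  move=> y; rewrite /= !pairw0; case: y => [[|[|//]] Hy] /=.
    by [].
  have -> : Ordinal Hy = o1 by apply: val_inj.
  by rewrite pairw1.
rewrite [X in _ * X](eq_bigl (fun _ : 'I_2 => false)); last first.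
  by move=> y; case: y => [[|[|//]] Hy].
rewrite big_pred0_eq mulr1.
case: ifP => H.
  rewrite (big_pred1 o1) ?pairw0 ?pairw1 // => y; by rewrite /= andbT.
by rewrite big_pred0 // => y; rewrite andbF.
Qed.

Lemma act_coef_pw_lt (k : fieldType) n (p M : 'M[k]_n) (v : word n 2) (a b : 'I_n) :
  (a < b)%N ->
  act_coef p M v (pairw a b) = M a (v o0) * M b (v o1) + p a b * (M b (v o0) * M a (v o1)).
Proof.
move=> ab; rewrite /act_coef.
rewrite (eq_bigl (fun u => (u == pairw a b) || (u == pairw b a))); last first.
  by move=> u; rewrite same_content_pair.
have nab : pairw a b != pairw b a.
  by rewrite pairw_inj; apply/nandP; left; rewrite neq_ltn ab.
rewrite (bigD1 (pairw a b)) ?eqxx //=.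
rewrite (big_pred1 (pairw b a)); last first.
  move=> u /=; case: (u =P pairw b a) => [->|_]; first by rewrite orbT eq_sym nab.
  by rewrite orbF; case: (u =P pairw a b).
rewrite !prod2 !skew_pw !pairw0 !pairw1 ab ltnNge (ltnW ab) /= mul1r.
by [].
Qed.

Lemma act_coef_pw_eq (k : fieldType) n (p M : 'M[k]_n) (v : word n 2) (a : 'I_n) :
  act_coef p M v (pairw a a) = M a (v o0) * M a (v o1).
Proof.
rewrite /act_coef (big_pred1 (pairw a a)); last first.
  by move=> u; rewrite same_content_pair orbb.
by rewrite prod2 skew_pw ltnn mul1r pairw0 pairw1.
Qed.

Lemma sorted_pw n (a b : 'I_n) : sorted_word (pairw a b) = (a <= b)%N.
Proof.
apply/forallP/idP => [H|ab x].
  by have /forallP/(_ o1)/implyP := H o0; rewrite pairw0 pairw1; apply.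
apply/forallP => y; apply/implyP.
case: x => [[|[|//]] Hx]; case: y => [[|[|//]] Hy] //= _.
- have -> : Ordinal Hx = o0 by apply: val_inj.
  by have -> : Ordinal Hy = o0 by apply: val_inj.
- have -> : Ordinal Hx = o0 by apply: val_inj.
  have -> : Ordinal Hy = o1 by apply: val_inj.
  by rewrite pairw0 pairw1.
- have -> : Ordinal Hx = o1 by apply: val_inj.
  by have -> : Ordinal Hy = o1 by apply: val_inj.
Qed.

Lemma eq_from (k : fieldType) (c u v x y : k) : x - y = c * (u - v) -> u = v -> x = y.
Proof. by move=> H E; apply/eqP; rewrite -subr_eq0 H E subrr mulr0. Qed.

Definition Wprop (k : fieldType) n (p M : 'M[k]_n) :=
  forall a b i j : 'I_n, M a j * M b i * (1 - p i j * p a b) = M b j * M a i * (p i j - p a b).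

Lemma aut_W (k : fieldType) n (p M : 'M[k]_n) : skew_params p -> is_aut p M -> Wprop p M.
Proof.
move=> [p0 [p1 pinv]] [_ H].
have Hlt : forall a b i j : 'I_n, (a < b)%N ->
    M a j * M b i * (1 - p i j * p a b) = M b j * M a i * (p i j - p a b).
  move=> a b i j ab.
  have := H i j (pairw a b); rewrite sorted_pw (ltnW ab) => /(_ isT).
  rewrite !act_coef_pw_lt // !pairw0 !pairw1 => E.
  apply: (eq_from (c := 1)) E; ring.
move=> a b i j; case: (ltngtP a b) => [ab|ba|eab].
- exact: Hlt.
- have := Hlt b a i j ba.
  have pba : p b a = (p a b)^-1 by apply: (mulfI (p0 a b)); rewrite pinv mulfV.
  rewrite pba => E.
  have pab0 := p0 a b.
  apply: (eq_from (c := p a b)) E; field => //.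
- move/val_inj: eab => eab; subst b.
  have := H i j (pairw a a); rewrite sorted_pw leqnn => /(_ isT).
  rewrite !act_coef_pw_eq !pairw0 !pairw1 (p1 a) => E.
  apply: (eq_from (c := 2)) E; ring.
Qed.

Lemma W_aut (k : fieldType) n (p M : 'M[k]_n) :
  (forall i, p i i = 1) -> (2 : k) != 0 -> M \in unitmx -> Wprop p M -> is_aut p M.
Proof.
move=> p1 two Mu W; split => // i j w.
rewrite [w]word2_eta sorted_pw.
move: (w o0) (w o1) => a b; rewrite leq_eqVlt => /orP[/eqP/val_inj <-|ab].
  rewrite !act_coef_pw_eq !pairw0 !pairw1.
  have := W a a i j; rewrite p1 => E.
  apply: (eq_from (c := 2^-1)) E; field => //.
rewrite !act_coef_pw_lt // !pairw0 !pairw1.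
have := W a b i j => E.
apply: (eq_from (c := 1)) E; ring.
Qed.

Lemma sum_sorted2 (k : fieldType) n (F : word n 2 -> k) :
  \sum_(w : word n 2 | sorted_word w) F w =
  \sum_(a : 'I_n) \sum_(b : 'I_n | (a <= b)%N) F (pairw a b).
Proof.
rewrite (reindex (fun x : 'I_n * 'I_n => pairw x.1 x.2)); last first.
  apply: onW_bij; exists (fun w : word n 2 => (w o0, w o1)).
    by case=> a b /=; rewrite pairw0 pairw1.
  by move=> w /=; rewrite -word2_eta.
rewrite (pair_big_dep xpredT (fun a b : 'I_n => (a <= b)%N) (fun a b => F (pairw a b))) /=.
by apply: eq_bigl => -[a b] /=; rewrite sorted_pw.
Qed.

Lemma trace2 (k : fieldType) n (p M : 'M[k]_n) :
  trace_deg p M 2 = \sum_(a : 'I_n) \sum_(b : 'I_n | (a <= b)%N) M a a * M b b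
     + \sum_(a : 'I_n) \sum_(b : 'I_n | (a < b)%N) p a b * (M b a * M a b).
Proof.
rewrite /trace_deg sum_sorted2 -big_split /=; apply: eq_bigr => a _.
rewrite (bigD1 a) ?leqnn //= [X in _ = X + _](bigD1 a) ?leqnn //=.
rewrite act_coef_pw_eq pairw0 pairw1 -addrA; congr (_ + _).
have Hp : forall b : 'I_n, ((a <= b)%N && (b != a)) = (a < b)%N.
  by move=> b; rewrite ltn_neqAle andbC eq_sym.
rewrite (eq_bigl _ _ Hp) [X in _ = X + _](eq_bigl _ _ Hp) -big_split /=.
apply: eq_bigr => b ab.
by rewrite act_coef_pw_lt ?pairw0 ?pairw1.
Qed.

Lemma sym_half (k : fieldType) n (g : 'I_n -> 'I_n -> k) :
  (forall a b, g a b = g b a) ->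
  \sum_(a : 'I_n) \sum_(b : 'I_n | (a <= b)%N) g a b + \sum_(a : 'I_n) \sum_(b : 'I_n | (a <= b)%N) g a b
  = \sum_(a : 'I_n) \sum_(b : 'I_n) g a b + \sum_(a : 'I_n) g a a.
Proof.
move=> gs.
have E1 : \sum_(a : 'I_n) \sum_(b : 'I_n | (b <= a)%N) g a b = \sum_(a : 'I_n) \sum_(b : 'I_n | (a <= b)%N) g a b.
  rewrite (exchange_big_dep xpredT) //=.
  by apply: eq_bigr => a _; apply: eq_bigr => b _; rewrite gs.
rewrite -[X in X + _ = _]E1 -!big_split /=; apply: eq_bigr => a _.
rewrite (bigID (fun b : 'I_n => (a <= b)%N) xpredT) /= addrC -addrA; congr (_ + _).
rewrite (bigD1 a) ?leqnn //= addrC; congr (_ + _).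
apply: eq_bigl => b; rewrite -ltnNge ltn_neqAle andbC eq_sym; congr (_ && _). by rewrite eq_sym.
Qed.

Lemma binC2 m : ('C(m.+2, m) * 2 = m.+2 * m.+1)%N.
Proof.
elim: m => [//|m IH].
rewrite binS binSn mulnDl IH.
by rewrite !mulSn !mulnS; ring.
Qed.

Lemma qr2 (k : fieldType) n (lam : k) : (2 <= n)%N ->
  qr_series_coef n lam 2 + qr_series_coef n lam 2 =
  (n * n.-1)%:R + 2%:R * n.-1%:R * lam + 2%:R * lam ^+ 2.
Proof.
case: n => [|[|m]] // _.
rewrite /qr_series_coef !big_ord_recr big_ord0 /= add0r.
rewrite !subn0 !subSS /= subn0.
have -> : (2 - 1 + m)%N = m.+1 by [].
have -> : (2 - 2 + m)%N = m by [].
rewrite binSn binn.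
have -> : ('C(2 + m, m) = 'C(m.+2, m))%N by [].
have H := binC2 m.
have -> : (m.+2 * m.+2.-1)%:R = ('C(m.+2, m) * 2)%:R :> k by rewrite H.
rewrite natrM.
ring.
Qed.

Lemma lin4 (k : fieldType) (x K c1 c2 c3 c4 a1 b1 a2 b2 a3 b3 a4 b4 : k) :
  x * K = c1 * (a1 - b1) + c2 * (a2 - b2) + c3 * (a3 - b3) + c4 * (a4 - b4) ->
  a1 = b1 -> a2 = b2 -> a3 = b3 -> a4 = b4 -> K != 0 -> x = 0.
Proof.
move=> H E1 E2 E3 E4 K0; move: H; rewrite E1 E2 E3 E4 !subrr !mulr0 !addr0 => /eqP.
by rewrite mulf_eq0 (negbTE K0) orbF => /eqP.
Qed.

Lemma sum_le_lt (k : fieldType) n (g : 'I_n -> 'I_n -> k) :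
  \sum_(a : 'I_n) \sum_(b : 'I_n | (a <= b)%N) g a b =
  \sum_(a : 'I_n) \sum_(b : 'I_n | (a < b)%N) g a b + \sum_(a : 'I_n) g a a.
Proof.
rewrite -big_split /=; apply: eq_bigr => a _.
rewrite (bigD1 a) ?leqnn //= addrC; congr (_ + _).
by apply: eq_bigl => b; rewrite ltn_neqAle andbC eq_sym.
Qed.

Lemma trace_Q (k : fieldType) n (p M : 'M[k]_n) (c : k) (y f : 'I_n -> k) :
  (2 <= n)%N -> c != 0 -> (2 : k) != 0 -> \sum_a y a * f a = 1 ->
  (forall a b, M a b = (a == b)%:R + c * (y a * f b)) ->
  trace_deg p M 2 = qr_series_coef n (1 + c) 2 ->
  \sum_(a : 'I_n) \sum_(b : 'I_n | (a < b)%N) (1 - p a b) * ((y a * f a) * (y b * f b)) = 0.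
Proof.
move=> n2 c0 two Su HM Etr.
set u := fun a => y a * f a.
have Hu : \sum_a u a = 1 by [].
have Mdiag : forall a, M a a = 1 + c * u a by move=> a; rewrite HM eqxx.
have Moff : forall a b : 'I_n, (a < b)%N -> M b a * M a b = c ^+ 2 * (u a * u b).
  move=> a b ab; rewrite !HM.
  have -> : (b == a) = false by apply/negbTE; rewrite neq_ltn ab orbT.
  have -> : (a == b) = false by apply/negbTE; rewrite neq_ltn ab.
  rewrite /u /= !add0r; ring.
set D := \sum_(a : 'I_n) \sum_(b : 'I_n | (a <= b)%N) M a a * M b b.
set P := \sum_(a : 'I_n) \sum_(b : 'I_n | (a < b)%N) p a b * (u a * u b).
set U := \sum_(a : 'I_n) \sum_(b : 'I_n | (a < b)%N) u a * u b.
set Sq := \sum_(a : 'I_n) u a * u a.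
set N := (n.-1)%:R : k.
have hn : (n%:R : k) = N + 1 by rewrite /N natr1 prednK // ltnW.
have E3 : D + c ^+ 2 * P = qr_series_coef n (1 + c) 2.
  rewrite -Etr trace2 /D /P mulr_sumr; congr (_ + _).
  apply: eq_bigr => a _; rewrite mulr_sumr; apply: eq_bigr => b ab.
  by rewrite Moff // mulrCA.
have E4 := qr2 (1 + c) n2.
have E2 : U + Sq + (U + Sq) = 1 + Sq.
  have := @sym_half _ _ (fun a b => u a * u b) (fun a b => mulrC _ _).
  rewrite sum_le_lt -/U -/Sq => ->.
  by rewrite -big_distrlr /= Hu mulr1.
have E1 : D + D = (n%:R + c) ^+ 2 + n%:R + 2 * c + c ^+ 2 * Sq.
  rewrite /D (@sym_half _ _ (fun a b => M a a * M b b) (fun a b => mulrC _ _)) /=.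
  rewrite -big_distrlr /=.
  have -> : \sum_(a < n) M a a = n%:R + c.
    rewrite (eq_bigr (fun a => 1 + c * u a)) // big_split /= -mulr_sumr Hu mulr1.
    by rewrite sumr_const card_ord.
  rewrite (eq_bigr (fun a => 1 + 2 * c * u a + c ^+ 2 * (u a * u a))); last first.
    by move=> a _; rewrite Mdiag; ring.
  rewrite !big_split /= -!mulr_sumr Hu sumr_const card_ord /Sq; ring.
have -> : \sum_(a : 'I_n) \sum_(b : 'I_n | (a < b)%N) (1 - p a b) * (u a * u b) = U - P.
  rewrite /U /P -sumrB; apply: eq_bigr => a _; rewrite -sumrB; apply: eq_bigr => b _; ring.
apply: (lin4 (K := 2 * c ^+ 2) (c1 := c ^+ 2) (c2 := -2) (c3 := 1) (c4 := -1) _ E2 E3 E1 E4).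
  rewrite natrM hn /=; ring.
by rewrite mulf_neq0 // expf_neq0.
Qed.

Lemma count_zero (k : fieldType) n (P : 'I_n -> 'I_n -> bool) (t : 'I_n -> 'I_n -> k) (g : k) :
  (forall m : nat, (m%:R == 0 :> k) = (m == 0)%N) -> g != 0 ->
  (forall a b, P a b -> t a b = 0 \/ t a b = g) ->
  \sum_a \sum_(b | P a b) t a b = 0 -> forall a b, P a b -> t a b = 0.
Proof.
move=> ch g0 H S.
have E : \sum_a \sum_(b | P a b) t a b =
         g * (\sum_a \sum_(b | P a b) ((t a b != 0%R) : nat))%:R.
  rewrite natr_sum mulr_sumr; apply: eq_bigr => a _.
  rewrite natr_sum mulr_sumr; apply: eq_bigr => b Pab.
  by case: (H a b Pab) => ->; rewrite ?eqxx ?mulr0 ?g0 ?mulr1.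
move: S; rewrite E => /eqP; rewrite mulf_eq0 (negbTE g0) /= ch sum_nat_eq0 => /forallP Hf a b Pab.
move/(_ a): Hf; rewrite /= sum_nat_eq0 => /forallP/(_ b)/implyP/(_ Pab).
by case: (t a b =P 0).
Qed.

Lemma two_eq (k : fieldType) (X q : k) : (2 : k) != 0 -> X * (1 - q) = X * (q - 1) -> X = 0 \/ q = 1.
Proof.
move=> two E.
have : X * (1 - q) * 2 = 0 by apply: (eq_from (c := 1)) E; ring.
move/eqP; rewrite !mulf_eq0 (negbTE two) orbF subr_eq0 => /orP[/eqP|/eqP] ->; by [left|right].
Qed.

Lemma eq_sym_neq (T : eqType) (x y : T) : x != y -> y != x.
Proof. by rewrite eq_sym. Qed.

Lemma core (k : fieldType) n (p M : 'M[k]_n) (c : k) (y f : 'I_n -> k) :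
  (forall m : nat, (m%:R == 0 :> k) = (m == 0)%N) ->
  skew_params p -> c != 0 -> 1 + c != 0 -> \sum_a y a * f a = 1 ->
  (forall a b, M a b = (a == b)%:R + c * (y a * f b)) -> Wprop p M ->
  \sum_(a : 'I_n) \sum_(b : 'I_n | (a < b)%N) (1 - p a b) * ((y a * f a) * (y b * f b)) = 0 ->
  forall a b, (y a != 0) || (f a != 0) -> (y b != 0) || (f b != 0) -> in_block p a b.
Proof.
move=> ch [p0 [p1 pinv]] c0 c1 Su HM W Q.
have two : (2 : k) != 0 by rewrite ch.
have Mo : forall a b, a != b -> M a b = c * (y a * f b).
  by move=> a b ab; rewrite HM (negbTE ab) add0r.
have Md : forall a, M a a = 1 + c * (y a * f a) by move=> a; rewrite HM eqxx.
have psym : forall i j, p i j = 1 -> p j i = 1.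
  by move=> i j e; have := pinv i j; rewrite e mul1r.
have H45 : forall s t, s != t -> y s != 0 -> f t != 0 -> M s s = 0 \/ p s t = 1.
  move=> s t st ys ft.
  have := W s s s t; rewrite p1 !mulr1 => E.
  case: (two_eq two E) => [/eqP|]; last by right.
  by rewrite mulf_eq0 Mo // !mulf_eq0 (negbTE c0) (negbTE ys) (negbTE ft) /= => /eqP; left.
have F1 : forall i j, i != j -> y i != 0 -> f i != 0 -> y j != 0 -> f j != 0 -> p i j = p j i.
  move=> i j ij yi fi yj fj.
  have ji : j != i by rewrite eq_sym.
  have nz : M i j * M j i != 0 by rewrite (Mo i j ij) (Mo j i ji) !mulf_neq0.
  have := W j i i j; rewrite pinv subrr mulr0 => /esym/eqP.
  by rewrite mulf_eq0 (negbTE nz) /= subr_eq0 => /eqP.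
have F3 : forall a i j, i != j -> a != i -> a != j -> y a != 0 -> f i != 0 -> f j != 0 -> p i j = 1.
  move=> a i j ij ai aj ya fi fj.
  have := W a a i j; rewrite p1 mulr1 => E.
  case: (two_eq two E) => [/eqP|//].
  by rewrite !Mo // !mulf_eq0 (negbTE c0) (negbTE ya) (negbTE fi) (negbTE fj).
have H3 : forall i j b, i != j -> i != b -> j != b -> y b != 0 -> f j != 0 ->
    c * (y i * f i) * (1 - p i j * p i b) = (1 + c * (y i * f i)) * (p i j - p i b).
  move=> i j b ij ib jb yb fj.
  have := W i b i j; rewrite Md !Mo // 1?eq_sym // => E.
  have nz : c * (y b * f j) != 0 by rewrite !mulf_neq0.
  apply: (mulfI nz); apply: (eq_from (c := 1)) E; ring.
have H3z : forall i j b, i != j -> i != b -> j != b -> y b != 0 -> f j != 0 ->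
    y i * f i = 0 -> p i j = p i b.
  move=> i j b ij ib jb yb fj ui.
  have := H3 i j b ij ib jb yb fj; rewrite ui !mulr0 ?mul0r ?addr0 ?mul1r => /esym/eqP.
  by rewrite subr_eq0 => /eqP.
have bad : forall s, M s s = 0 -> c * (y s * f s) = -1.
  by move=> s; rewrite Md => /eqP; rewrite addrC addr_eq0 => /eqP.
have nzpair : forall a, y a * f a != 0 -> y a != 0 /\ f a != 0.
  by move=> a; rewrite mulf_eq0 negb_or => /andP[].
have K0lt : forall a b : 'I_n, (a < b)%N -> y a * f a != 0 -> y b * f b != 0 -> p a b = 1.
  move=> a b ab ua ub.
  have hg : 2 / c ^+ 2 != 0 by rewrite mulf_neq0 // invr_neq0 // expf_neq0.
  suff Hall : forall a' b' : 'I_n, (a' < b')%N ->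
     (1 - p a' b') * (y a' * f a' * (y b' * f b')) = 0 \/
     (1 - p a' b') * (y a' * f a' * (y b' * f b')) = 2 / c ^+ 2.
    have := @count_zero k n (fun a b : 'I_n => (a < b)%N)
      (fun a b : 'I_n => (1 - p a b) * (y a * f a * (y b * f b))) (2 / c ^+ 2) ch hg Hall Q a b ab.
    move/eqP; rewrite mulf_eq0 (negbTE (mulf_neq0 ua ub)) orbF subr_eq0 => /eqP; by [].
  move=> a' b' ab'.
  have a'b' : a' != b' by rewrite neq_ltn ab'.
  have b'a' : b' != a' by rewrite eq_sym.
  case: (y a' * f a' =P 0) => [->|/eqP ua']; first by left; rewrite mul0r mulr0.
  case: (y b' * f b' =P 0) => [->|/eqP ub']; first by left; rewrite !mulr0.
  case: (p a' b' =P 1) => [->|pn]; first by left; rewrite subrr mul0r.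
  right.
  have [ya' fa'] := nzpair _ ua'; have [yb' fb'] := nzpair _ ub'.
  have Ma : M a' a' = 0 by case: (H45 a' b' a'b' ya' fb').
  have Mb : M b' b' = 0.
    by case: (H45 b' a' b'a' yb' fa') => // /psym /pn.
  have pm : p a' b' = -1.
    have := pinv a' b'; rewrite -(F1 a' b') // => E.
    have : (p a' b' - 1) * (p a' b' + 1) = 0 by apply: (eq_from (c := 1)) E; ring.
    move/eqP; rewrite mulf_eq0 subr_eq0 (introF eqP pn) /= addr_eq0 => /eqP; by [].
  have ea := bad _ Ma; have eb := bad _ Mb.
  rewrite pm.
  have -> : y a' * f a' = - c^-1 by apply: (mulfI c0); rewrite ea mulrN mulfV.
  have -> : y b' * f b' = - c^-1 by apply: (mulfI c0); rewrite eb mulrN mulfV.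
  by field.
have K0 : forall a b, a != b -> y a * f a != 0 -> y b * f b != 0 -> p a b = 1.
  move=> a b ab ua ub; case: (ltngtP a b) => [lt|gt|eq].
  - exact: K0lt.
  - by apply: psym; apply: K0lt.
  - by move: ab; rewrite (val_inj eq) eqxx.
have S1 : forall s t, s != t -> y s != 0 -> f t != 0 -> p s t = 1.
  move=> s t st ys ft.
  case: (H45 s t st ys ft) => [Ms|//].
  have es := bad _ Ms.
  have us : y s * f s != 0 by apply/eqP => u0; move: es; rewrite u0 mulr0 => /eqP; rewrite eq_sym oppr_eq0 oner_eq0.
  case: (pickP (fun t' => (t' != s) && (y t' * f t' != 0))) => [t' /andP[t's ut']|none]; last first.
    exfalso; move/eqP: c1; apply.
    have : \sum_a y a * f a = y s * f s.
      rewrite (bigD1 s) //= big1 ?addr0 // => a /negbTE nas.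
      by have := none a; rewrite nas /= => /negbFE/eqP.
    by rewrite Su => e; rewrite -e mulr1 in es; rewrite es addrN.
  have st' : s != t' by rewrite eq_sym.
  have pst' := K0 s t' st' us ut'.
  case: (t =P t') => [->//|/eqP tt'].
  have [yt' ft'] := nzpair _ ut'.
  have := H3 s t t' st st' tt' yt' ft.
  rewrite es pst' mulr1 subrr mul0r => /eqP; rewrite mulN1r oppr_eq0 subr_eq0 => /eqP; by [].
have [s0 us0] : exists s0, y s0 * f s0 != 0.
  case: (pickP (fun a => y a * f a != 0)) => [a ua|none]; first by exists a.
  exfalso; move: Su; rewrite big1 => [/eqP|a _]; first by rewrite eq_sym oner_eq0.
  by have := none a => /negbFE/eqP.
have [ys0 fs0] := nzpair _ us0.
have U2 : forall a b, (y a != 0) || (f a != 0) -> (y b != 0) || (f b != 0) -> p a b = 1.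
  move=> a b Ua Ub; case: (a =P b) => [->|/eqP ab]; first exact: p1.
  have ba : b != a by rewrite eq_sym.
  case: (y a =P 0) => [ya0|/eqP ya]; case: (f b =P 0) => [fb0|/eqP fb]; last first.
  - exact: S1.
  -
    move: Ub; rewrite fb0 eqxx orbF => yb.
    case: (f a =P 0) => [fa0|/eqP fa]; last by apply: psym; apply: S1.
    have a_s0 : a != s0 by apply/eqP => e; move: fs0; rewrite -e fa0 eqxx.
    have bs0 : b != s0 by apply/eqP => e; move: fs0; rewrite -e fb0 eqxx.
    have := H3z a s0 b a_s0 ab (eq_sym_neq bs0) yb fs0; rewrite fa0 mulr0 => /(_ erefl).
    by move=> <-; apply: S1.
  - move: Ua; rewrite ya0 eqxx /= => fa.
    case: (y b =P 0) => [yb0|/eqP yb]; last by apply: psym; apply: S1.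
    have sa : s0 != a by apply/eqP => e; move: ys0; rewrite e ya0 eqxx.
    have sb : s0 != b by apply/eqP => e; move: ys0; rewrite e yb0 eqxx.
    exact: (F3 s0 a b ab sa sb ys0 fa fb).
  - move: Ua; rewrite ya0 eqxx /= => fa.
    move: Ub; rewrite fb0 eqxx orbF => yb.
    by apply: psym; apply: S1.
move=> a b Ua Ub l.
case: (boolP ((y l != 0) || (f l != 0))) => [Ul|].
  by rewrite (U2 a l Ua Ul) (U2 b l Ub Ul).
rewrite negb_or !negbK => /andP[/eqP yl0 /eqP fl0].
have C : forall x, (y x != 0) || (f x != 0) -> p l x = p l s0.
  move=> x Ux; case: (x =P s0) => [->//|/eqP xs].
  have ls : l != s0 by apply/eqP => e; move: ys0; rewrite -e yl0 eqxx.
  have lx : l != x by apply/eqP => e; move: Ux; rewrite -e yl0 fl0 eqxx.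
  have ul : y l * f l = 0 by rewrite yl0 mul0r.
  case/orP: Ux => [yx|fx].
  - by rewrite (H3z l s0 x ls lx (eq_sym_neq xs) yx fs0 ul).
  - exact: (H3z l x s0 lx ls xs ys0 fx ul).
apply: (mulIf (p0 l a)); rewrite pinv (C a Ua) -(C b Ub) pinv //.
Qed.

Lemma block_W (k : fieldType) n (p G : 'M[k]_n) : skew_params p ->
  (forall a b, G a b != 0 -> in_block p a b) -> Wprop p G.
Proof.
move=> [p0 [p1 pinv]] HB a b i j.
have L : G a j * G b i * (1 - p i j * p a b) = 0.
  case: (G a j =P 0) => [->|/eqP aj]; first by rewrite !mul0r.
  case: (G b i =P 0) => [->|/eqP bi]; first by rewrite mulr0 mul0r.
  have e1 := HB _ _ aj b; have e2 := HB _ _ bi j.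
  by rewrite e1 -e2 pinv subrr mulr0.
have R : G b j * G a i * (p i j - p a b) = 0.
  case: (G b j =P 0) => [->|/eqP bj]; first by rewrite !mul0r.
  case: (G a i =P 0) => [->|/eqP ai]; first by rewrite mulr0 mul0r.
  have e1 := HB _ _ ai b; have e3 := HB _ _ bj i.
  have e4 : p i b = p i j by apply: (mulIf (p0 j i)); rewrite pinv -e3 pinv.
  by rewrite e1 e4 subrr mulr0.
by rewrite L R.
Qed.

Lemma unit_of_ker (k:fieldType) n (A : 'M[k]_n) : (forall v : 'rV_n, v *m A = 0 -> v = 0) -> A \in unitmx.
Proof.
move=> H; rewrite -row_free_unit -kermx_eq0; apply/eqP/row_matrixP => i; rewrite row0; apply: H.
by rewrite -row_mul mulmx_ker row0.
Qed.

Theorem proposition2p6 (k : closedFieldType) (n : nat) (p : 'M[k]_n) (T : 'M[k]_n) :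
  [pchar k] =i pred0 -> (2 <= n)%N -> skew_params p -> is_reflection p T ->
  exists (G : 'M[k]_n) (i : 'I_n) (lam : k),
    elementary p G /\ lam != 0 /\ lam != 1 /\
    invmx G *m T *m G = std_refl i lam.
Proof.
move=> chk n2 hp [lam [[Taut [lam1 Htr]] [_ [P [Pu HMP]]]]].
have ch : forall m : nat, (m%:R == 0 :> k) = (m == 0)%N by apply/pcharf0P.
have two : (2 : k) != 0 by rewrite ch.
have [p0 [p1 pinv]] := hp.
have n0 : (n.-1 < n)%N by rewrite ltn_predL ltnW.
set s0 : 'I_n := Ordinal n0.
set c := lam - 1.
have c0 : c != 0 by rewrite subr_eq0.
have lamc : lam = 1 + c by rewrite /c addrC subrK.
set y := fun a => P a s0.
set f := fun b => invmx P s0 b.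
set D : 'M[k]_n := diag_mx (\row_(j < n) if (val j == n.-1)%N then lam else 1).
have TD : T = P *m D *m invmx P by rewrite -HMP mulmxK.
have HM : forall a b, T a b = (a == b)%:R + c * (y a * f b).
  move=> a b; rewrite TD /D mul_mx_diag mxE.
  rewrite (eq_bigr (fun kk => P a kk * invmx P kk b + (if kk == s0 then c * (y a * f b) else 0))); last first.
    move=> kk _; rewrite !mxE.
    have -> : (val kk == n.-1) = (kk == s0) by [].
    case: (kk =P s0) => [->|_]; last by rewrite mulr1 addr0.
    by rewrite /y /f lamc; ring.
  rewrite big_split /= -big_mkcond big_pred1_eq /=.
  have := mulmxV Pu; move/matrixP/(_ a b); rewrite !mxE => ->.
  by [].
have Su : \sum_a y a * f a = 1.
  have := mulVmx Pu; move/matrixP/(_ s0 s0); rewrite !mxE eqxx /= => E.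
  by rewrite -[RHS]E; apply: eq_bigr => a _; rewrite mulrC.
have lam0 : lam != 0.
  have : \det T = lam.
    rewrite TD !det_mulmx det_inv det_diag mulrAC mulfV ?mul1r; last first.
      by rewrite -unitfE -unitmxE.
    rewrite (bigD1 s0) //= big1 ?mulr1; first by rewrite mxE eqxx.
    by move=> i /negbTE ni; rewrite mxE; have -> : (val i == n.-1) = (i == s0) by []; rewrite ni.
  move=> <-; rewrite -unitfE -unitmxE; exact: Taut.1.
have c1 : 1 + c != 0 by rewrite -lamc.
have Q := trace_Q n2 c0 two Su HM (etrans (Htr 2) (congr1 (fun l => qr_series_coef n l 2) lamc)).
have W := aut_W hp Taut.
have B := core ch hp c0 c1 Su HM W Q.
have [s fs] : exists s, f s != 0.
  case: (pickP (fun a => f a != 0)) => [a fa|none]; first by exists a.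
  exfalso; move: Su; rewrite big1 => [/eqP|a _]; first by rewrite eq_sym oner_eq0.
  by have := none a => /negbFE/eqP ->; rewrite mulr0.
set G : 'M[k]_n := \matrix_(a, b) (if b == s then y a else (a == b)%:R - (a == s)%:R * (f b / f s)).
have GS : forall w : 'I_n -> k, \sum_a w a * G a s = \sum_a w a * y a.
  by move=> w; apply: eq_bigr => a _; rewrite mxE eqxx.
have GL : forall (w : 'I_n -> k) b, b != s -> \sum_a w a * G a b = w b - w s * (f b / f s).
  move=> w b bs.
  rewrite (eq_bigr (fun a => (if a == b then w a else 0) - (if a == s then w a * (f b / f s) else 0))); last first.
    move=> a _; rewrite mxE (negbTE bs).
    by case: (a == b); case: (a == s); rewrite /= ?mulr1n ?mulr0n; ring.
  by rewrite sumrB -!big_mkcond !big_pred1_eq.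
have fG : forall b, \sum_a f a * G a b = (b == s)%:R.
  move=> b; case: (b =P s) => [->|/eqP bs].
    by rewrite GS ?eqxx -[RHS]Su; apply: eq_bigr => a _; rewrite mulrC.
  by rewrite GL // mulrCA mulfV // mulr1 subrr.
have GB : forall a b, G a b != 0 -> in_block p a b.
  move=> a b; rewrite mxE; case: (b =P s) => [->|/eqP bs] H.
    by apply: B; rewrite ?H ?fs ?orbT.
  case: (a =P b) => [->|/eqP ab]; first by [].
  move: H; rewrite (negbTE ab) sub0r oppr_eq0.
  case: (a =P s) => [->|_]; last by rewrite mul0r eqxx.
  rewrite mul1r mulf_eq0 negb_or invr_eq0 => /andP[fb _].
  by apply: B; rewrite ?fb ?fs ?orbT.
have Gu : G \in unitmx.
  apply: unit_of_ker => v /matrixP Hv.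
  have Hv' : forall b, \sum_a v 0 a * G a b = 0.
    by move=> b; have := Hv 0 b; rewrite !mxE.
  have Hb : forall b, v 0 b = v 0 s * (f b / f s).
    move=> b; case: (b =P s) => [->|/eqP bs]; first by rewrite mulfV // mulr1.
    by apply/eqP; rewrite -subr_eq0 -GL // Hv'.
  have : v 0 s / f s = 0.
    have := Hv' s; rewrite GS (eq_bigr (fun a => v 0 s / f s * (y a * f a))); last first.
      by move=> a _; rewrite (Hb a); ring.
    by rewrite -mulr_sumr Su mulr1.
  move/eqP; rewrite mulf_eq0 invr_eq0 (negbTE fs) orbF => /eqP vs.
  apply/matrixP => i j; rewrite (ord1 i) Hb vs mul0r mxE //.
have Gas : forall a, G a s = y a by move=> a; rewrite mxE eqxx.
clearbody G.
have TG : T *m G = G *m std_refl s lam.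
  apply/matrixP => a b; rewrite /std_refl mul_mx_diag !mxE.
  rewrite (eq_bigr (fun kk => (if kk == a then G kk b else 0) + c * y a * (f kk * G kk b))); last first.
    move=> kk _; rewrite HM; case: (kk =P a) => [->|/eqP ne]; rewrite ?eqxx ?(negbTE ne) 1?eq_sym ?(negbTE ne) /=; ring.
  rewrite big_split /= -big_mkcond big_pred1_eq -mulr_sumr fG.
  case: (b =P s) => [->|_] /=; last by rewrite mulr0 addr0 mulr1.
  by rewrite mulr1 lamc Gas; ring.
exists G, s, lam; split.
  by split => //; apply: W_aut => //; apply: block_W.
split => //; split => //.
by rewrite -mulmxA TG mulmxA mulVmx // mul1mx.
Qed.
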